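(* Let $\partial$ and $\partial'$ be $(A,B)$-equivalent $M_{A,B}$-differentials. Then the set of all $\partial$-trivial elements coincides with the set of all $\partial'$-trivial elements.
   Context: $\mathbb E$ is a field. $A=\{a_1\prec\dots\prec a_N\}$ is a finite linearly ordered set with a grading $\deg:A\to\mathbb Z$; $\mathbb E(A)$ is the graded vector space with basis $A$. An $M$-differential is a linear map $\partial:\mathbb E(A)\to\mathbb E(A)$ of degree $-1$ with $\partial^2=0$ and $\partial(a_i)\in\mathrm{span}\{a_1,\dots,a_{i-1}\}$ for all $i$. For $B\subset A$ with $\partial(\mathbb E(B))\subset\mathbb E(B)$, $\partial$ is called an $M_{A,B}$-differential. $\mathrm{Aut}_T(A,B)$ is the group of graded linear automorphisms $g$ of $\mathbb E(A)$ preserving each subspace $\mathrm{span}\{a_1,\dots,a_i\}$ and with $g(\mathbb E(B))=\mathbb E(B)$. Two $M_{A,B}$-differentials are $(A,B)$-equivalent if $\partial_2=g\partial_1g^{-1}$ for some $g\in\mathrm{Aut}_T(A,B)$. An element $a_k\in B$ is $\partial$-trivial if $k<N$, $a_{k+1}\in A\setminus B$, and $a_k$ appears with nonzero coefficient in the expansion of $\partial(a_{k+1})$ in the basis $A$. *)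

(* Defs.v *)
From HB Require Import structures.
From mathcomp Require Import all_boot all_order all_algebra.
Set Implicit Arguments. Unset Strict Implicit. Unset Printing Implicit Defensive.
Import GRing.Theory.
Local Open Scope ring_scope.

(* Conventions: the ordered basis A = {a_1 < ... < a_N} is indexed by 'I_N
   (a_{i+1} <-> ordinal i, order = order of indices); deg : 'I_N -> int is the
   grading; B is a subset {set 'I_N}.  A linear map f of E(A) is represented by
   its matrix M : 'M[E]_N in the basis A, with the COLUMN convention:
   M i j = coefficient of a_i in f(a_j), i.e. f(a_j) = \sum_i M i j a_i. *)

Definition has_degree (E : fieldType) (N : nat) (deg : 'I_N -> int) (d : int)
  (M : 'M[E]_N) : Prop :=
  forall i j : 'I_N, M i j != 0 -> deg i = deg j + d.

Definition M_differential (E : fieldType) (N : nat) (deg : 'I_N -> int)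
  (D : 'M[E]_N) : Prop :=
  [/\ has_degree deg (-1) D,
      D *m D = 0 &
      forall i j : 'I_N, D i j != 0 -> (i < j)%N].

Definition preserves (E : fieldType) (N : nat) (B : {set 'I_N}) (M : 'M[E]_N) : Prop :=
  forall i j : 'I_N, j \in B -> M i j != 0 -> i \in B.

Definition MAB_differential (E : fieldType) (N : nat) (deg : 'I_N -> int)
  (B : {set 'I_N}) (D : 'M[E]_N) : Prop :=
  M_differential deg D /\ preserves B D.

(* Aut_T(A,B): graded (degree 0) linear automorphisms preserving every
   span{a_1..a_i} (upper triangular in column convention) with g(E(B)) = E(B)
   (i.e. g(E(B)) <= E(B) and g^{-1}(E(B)) <= E(B)). *)
Definition AutT (E : fieldType) (N : nat) (deg : 'I_N -> int)
  (B : {set 'I_N}) (g : 'M[E]_N) : Prop :=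
  [/\ g \in unitmx,
      has_degree deg 0 g,
      (forall i j : 'I_N, g i j != 0 -> (i <= j)%N),
      preserves B g &
      preserves B (invmx g)].

Definition AB_equivalent (E : fieldType) (N : nat) (deg : 'I_N -> int)
  (B : {set 'I_N}) (D1 D2 : 'M[E]_N) : Prop :=
  exists g : 'M[E]_N, AutT deg B g /\ D2 = g *m D1 *m invmx g.

Definition D_trivial (E : fieldType) (N : nat) (B : {set 'I_N})
  (D : 'M[E]_N) (k : 'I_N) : Prop :=
  exists h : (k.+1 < N)%N,
    [/\ k \in B, Ordinal h \notin B & D k (Ordinal h) != 0].

(* Main.v *)
Require Import Defs.
From mathcomp Require Import all_boot all_order all_algebra.
Import GRing.Theory.
Local Open Scope ring_scope.

Lemma diag_neq0 (E : fieldType) (N : nat) (g : 'M[E]_N) :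
  g \in unitmx -> (forall i j : 'I_N, g i j != 0 -> (i <= j)%N) ->
  forall i, g i i != 0.
Proof.
move=> gu gt i; apply/negP => /eqP gi0.
move: gu; rewrite unitmxE -det_tr det_trig.
  by rewrite (bigD1 i) //= mxE gi0 mul0r unitr0.
apply/forallP => a; apply/forallP => b; apply/implyP => ab; rewrite mxE.
apply/negPn/negP => /gt; by rewrite leqNgt ab.
Qed.

Lemma key (E : fieldType) (N : nat) (g D1 D2 : 'M[E]_N) (k : 'I_N) (h : (k.+1 < N)%N) :
  (forall i j : 'I_N, g i j != 0 -> (i <= j)%N) ->
  (forall i j : 'I_N, D1 i j != 0 -> (i < j)%N) ->
  (forall i j : 'I_N, D2 i j != 0 -> (i < j)%N) ->
  D2 *m g = g *m D1 ->
  D2 k (Ordinal h) * g (Ordinal h) (Ordinal h) = g k k * D1 k (Ordinal h).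
Proof.
move=> gt d1 d2 e.
have := congr1 (fun M : 'M[E]_N => M k (Ordinal h)) e; rewrite /= !mxE.
have hk : Ordinal h != k by rewrite -val_eqE /= gtn_eqF.
have hk2 : k != Ordinal h by rewrite eq_sym.
rewrite (bigD1 (Ordinal h)) //= (bigD1 k) //=.
set L := (X in X = _); rewrite (bigD1 k) //= (bigD1 (Ordinal h)) //=; rewrite /L.
rewrite big1 ?big1.
- move=> H.
  have z1 : D1 (Ordinal h) (Ordinal h) = 0.
    by apply/eqP/negPn/negP => /d1; rewrite ltnn.
  have z2 : D2 k k = 0.
    by apply/eqP/negPn/negP => /d2; rewrite ltnn.
  by move: H; rewrite z1 z2 !mul0r !mulr0 !addr0.
- move=> i /andP [ik ih].
  case: (eqVneq (D1 i (Ordinal h)) 0) => [->|/d1 /= lt]; first by rewrite mulr0.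
  case: (eqVneq (g k i) 0) => [->|/gt le]; first by rewrite mul0r.
  exfalso; move: ik ih; rewrite -!val_eqE /=.
  have : (nat_of_ord i = k) by apply/eqP; rewrite eqn_leq le -ltnS lt.
  by move=> ->; rewrite eqxx ?orbT ?andbF.
- move=> i /andP [ih ik].
  case: (eqVneq (D2 k i) 0) => [->|/d2 /= lt]; first by rewrite mul0r.
  case: (eqVneq (g i (Ordinal h)) 0) => [->|/gt le]; first by rewrite mulr0.
  exfalso; move: ik ih; rewrite -!val_eqE /=.
  have : (nat_of_ord i = k.+1) by apply/eqP; rewrite eqn_leq le lt.
  by move=> ->; rewrite eqxx ?orbT ?andbF.
Qed.

Theorem lemma2p1 (E : fieldType) (N : nat) (deg : 'I_N -> int)
  (B : {set 'I_N}) (D1 D2 : 'M[E]_N) :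
  MAB_differential deg B D1 -> MAB_differential deg B D2 ->
  AB_equivalent deg B D1 D2 ->
  forall k : 'I_N, D_trivial B D1 k <-> D_trivial B D2 k.
Proof.
move=> [[_ _ d1] _] [[_ _ d2] _] [g [[gu _ gt _ _] e]] k.
have e' : D2 *m g = g *m D1 by rewrite e -mulmxA mulVmx // mulmx1.
have kk := fun h => @key E N g D1 D2 k h gt d1 d2 e'.
have dg := @diag_neq0 E N g gu gt.
split=> -[h [kB hB nz]]; exists h; split=> //; move: (kk h) nz.
- move=> H nz; apply/eqP => z; move: H; rewrite z mul0r => /esym/eqP.
  by rewrite mulf_eq0 (negbTE (dg k)) (negbTE nz).
- move=> H nz; apply/eqP => z; move: H; rewrite z mulr0 => /eqP.
  by rewrite mulf_eq0 (negbTE (dg _)) (negbTE nz).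
Qed.
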